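(* Let $w\in RH_1$ and for $n\in\mathbb{N}$ define $$w_n(t)=\begin{cases}\frac1n,& w(t)\le\frac1n,\\ w(t),&\frac1n\le w(t)\le n,\\ n,& w(t)\ge n.\end{cases}$$ Then $[w_n]_{RH_1}\le[w]_{RH_1}$. Moreover, for every $w\in A_\infty$ the same truncation satisfies $[w_n]_{A_\infty}\le[w]_{A_\infty}$.
   Context: Weights are locally integrable, a.e. positive functions on $\mathbb{R}$; $\langle f\rangle_J=\frac1{|J|}\int_J f$. $[w]_{RH_1}=\sup_J\Big\langle \frac{w}{\langle w\rangle_J}\log\frac{w}{\langle w\rangle_J}\Big\rangle_J$ and $[w]_{A_\infty}=\sup_J\langle w\rangle_Je^{-\langle\log w\rangle_J}$, suprema over intervals $J\subset\mathbb{R}$; $w\in RH_1$ (resp. $A_\infty$) iff the corresponding constant is finite. *)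

(* Defs.v *)
From HB Require Import structures.
From mathcomp Require Import all_boot all_order all_algebra.
From mathcomp Require Import all_classical all_reals all_analysis.
Set Implicit Arguments. Unset Strict Implicit. Unset Printing Implicit Defensive.
Import Order.TTheory GRing.Theory Num.Theory.
Local Open Scope classical_set_scope.
Local Open Scope ring_scope.

Section weights.
Context {R : realType}.
Local Notation mu := (@lebesgue_measure R).

Definition weight (w : R -> R) : Prop :=
  locally_integrable setT w /\ {ae mu, forall x, 0 < w x}.

Definition avg (f : R -> R) (a b : R) : \bar R :=
  ((b - a)^-1)%:E * \int[mu]_(x in `[a, b]) (f x)%:E.

(* < (w/<w>_J) log (w/<w>_J) >_J  (ln is the natural logarithm; the
   integrand is bounded below by -1/e, so the average is well defined in \bar R) *)
Definition rh1_avg (w : R -> R) (a b : R) : \bar R :=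
  let c := fine (avg w a b) in
  avg (fun x => (w x / c) * ln (w x / c)) a b.

(* <w>_J * exp(- <log w>_J), with exp(+oo) = +oo. *)
Definition ainf_avg (w : R -> R) (a b : R) : \bar R :=
  (avg w a b * expeR (- avg (fun x => ln (w x)) a b))%E.

Definition RH1_const (w : R -> R) : \bar R :=
  ereal_sup [set r | exists a b : R, a < b /\ r = rh1_avg w a b].

Definition Ainf_const (w : R -> R) : \bar R :=
  ereal_sup [set r | exists a b : R, a < b /\ r = ainf_avg w a b].

Definition trunc (n : nat) (w : R -> R) (t : R) : R :=
  Num.min (Num.max (w t) (n%:R)^-1) n%:R.

End weights.

(* Main.v *)
Require Import Defs.
From HB Require Import structures.
From mathcomp Require Import all_boot all_order all_algebra.
From mathcomp Require Import all_classical all_reals all_analysis.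
From mathcomp Require Import measurable_realfun lebesgue_Rintegral.
From mathcomp Require Import ring lra.
Import Order.TTheory GRing.Theory Num.Theory.
Import numFieldNormedType.Exports.
Local Open Scope classical_set_scope.
Local Open Scope ring_scope.

Set Implicit Arguments. Unset Strict Implicit.
Section proof.
Context {R : realType}.
Local Notation mu := (@lebesgue_measure R).

Lemma mJ (a b : R) : measurable (`[a, b] : set R).
Proof. exact: measurable_itv. Qed.

Lemma muJ (a b : R) : a < b -> mu `[a, b] = (b - a)%:E.
Proof. by move=> ab; rewrite lebesgue_measure_itv /= lte_fin ab EFinB. Qed.

Lemma bdd_integrable (a b : R) (f : R -> R) (C : R) : a < b ->
  measurable_fun setT f -> (forall x, `|f x| <= C) ->
  mu.-integrable `[a, b] (EFin \o f).
Proof.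
move=> ab mf fC; apply: measurable_bounded_integrable.
- exact: mJ.
- by change (mu `[a, b] < +oo)%E; rewrite muJ // ltry.
- exact: measurable_funS mf.
- exists C; split; first by rewrite num_real.
  by move=> M CM x _; rewrite /= (le_trans (fC x))// ltW.
Qed.

Lemma Rint_cst (a b : R) (r : R) : a < b ->
  \int[mu]_(x in `[a, b]) r = r * (b - a).
Proof.
move=> ab; rewrite Rintegral_cst ?mJ//; congr (_ * _).
by rewrite (_ : fine _ = fine (b - a)%:E)//; congr fine; exact: muJ.
Qed.

Lemma avg_fin (a b : R) (f : R -> R) : mu.-integrable `[a, b] (EFin \o f) ->
  avg f a b = ((b - a)^-1 * \int[mu]_(x in `[a, b]) f x)%:E.
Proof.
move=> fi; rewrite /avg EFinM /Rintegral fineK //.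
apply: (integrable_fin_num _ fi); exact: measurable_itv.
Qed.


Lemma aeS (P Q : R -> Prop) : (forall x, P x -> Q x) ->
  {ae mu, forall x, P x} -> {ae mu, forall x, Q x}.
Proof.
move=> PQ [N [mN N0 PN]]; exists N; split => // x /= nQx; apply: PN => /=.
by move=> Px; apply: nQx; exact: PQ.
Qed.

Lemma avg_ae (a b : R) (f g : R -> R) :
  measurable_fun setT f -> measurable_fun setT g ->
  {ae mu, forall x, f x = g x} -> avg f a b = avg g a b.
Proof.
move=> mf mg fg; rewrite /avg; congr (_ * _)%E.
apply: ae_eq_integral.
- exact: measurable_itv.
- by apply/measurable_EFinP; exact: measurable_funS mf.
- by apply/measurable_EFinP; exact: measurable_funS mg.
- by apply: aeS fg => x /= ->.
Qed.

Definition pos (w : R -> R) x : R := if 0 < w x then w x else 1.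

Lemma pos_gt0 (w : R -> R) x : 0 < pos w x.
Proof. by rewrite /pos; case: ifP. Qed.

Lemma measurable_pos (w : R -> R) : measurable_fun setT w -> measurable_fun setT (pos w).
Proof.
move=> mw; apply: measurable_fun_ifT => //.
exact: measurable_fun_ltr.
Qed.

Lemma ae_pos (w : R -> R) (G : R -> R) : {ae mu, forall x, 0 < w x} ->
  {ae mu, forall x, G (w x) = G (pos w x)}.
Proof. by apply: aeS => x wx; rewrite /pos wx. Qed.

Lemma measurable_trunc n (w : R -> R) : measurable_fun setT w -> measurable_fun setT (trunc n w).
Proof.
move=> mw; apply: measurable_minr => //.
exact: measurable_maxr.
Qed.

Lemma ainf_pos (a b : R) (w : R -> R) : measurable_fun setT w -> {ae mu, forall x, 0 < w x} ->
  ainf_avg w a b = ainf_avg (pos w) a b.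
Proof.
move=> mw wp; have mp := measurable_pos mw.
rewrite /ainf_avg (avg_ae a b mw mp (ae_pos id wp)).
rewrite (avg_ae a b _ _ (ae_pos (@ln R) wp)) //.
- exact: (measurableT_comp (@measurable_ln R) mw).
- exact: (measurableT_comp (@measurable_ln R) mp).
Qed.

Lemma trunc_pos n (w : R -> R) : {ae mu, forall x, 0 < w x} ->
  {ae mu, forall x, trunc n w x = trunc n (pos w) x}.
Proof. by apply: aeS => x wx; rewrite /trunc /pos wx. Qed.

Lemma ainf_trunc_pos (a b : R) n (w : R -> R) : measurable_fun setT w -> {ae mu, forall x, 0 < w x} ->
  ainf_avg (trunc n w) a b = ainf_avg (trunc n (pos w)) a b.
Proof.
move=> mw wp; have mp := measurable_pos mw.
have mt := measurable_trunc n mw; have mtp := measurable_trunc n mp.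
rewrite /ainf_avg (avg_ae a b mt mtp (trunc_pos n wp)).
rewrite (avg_ae a b _ _ (_ : {ae mu, forall x, ln (trunc n w x) = ln (trunc n (pos w) x)})) //.
- exact: (measurableT_comp (@measurable_ln R) mt).
- exact: (measurableT_comp (@measurable_ln R) mtp).
- by apply: aeS (trunc_pos n wp) => x ->.
Qed.

Lemma rh1_ae (a b : R) (f g : R -> R) : measurable_fun setT f -> measurable_fun setT g ->
  {ae mu, forall x, f x = g x} -> rh1_avg f a b = rh1_avg g a b.
Proof.
move=> mf mg fg; rewrite /rh1_avg (avg_ae a b mf mg fg).
set c := fine _.
have mc : forall h : R -> R, measurable_fun setT h ->
    measurable_fun setT (fun x => h x / c * ln (h x / c)).
  move=> h mh; apply: measurable_funM.
    exact: measurable_funM.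
  apply: (measurableT_comp (@measurable_ln R)).
  exact: measurable_funM.
apply: avg_ae; [exact: mc|exact: mc|].
by apply: aeS fg => x ->.
Qed.

End proof.

Section real.
Context {R : realType}.

Lemma ln_le_sub1 (x : R) : 0 < x -> ln x <= x - 1.
Proof.
move=> x0; have h : -1 < x - 1 by lra.
by have := le_ln1Dx h; rewrite addrC subrK.
Qed.

Lemma trunc_cases (p s n : R) : s <= n ->
  (s <= p <= n /\ Num.min (Num.max p s) n = p) \/
  (p < s /\ Num.min (Num.max p s) n = s) \/
  (n < p /\ Num.min (Num.max p s) n = n).
Proof.
move=> sn; have [ps|sp] := ltP p s.
  by right; left; split => //; exact: min_l.
have [np|pn] := ltP n p.
  by right; right.
by left; split => //; apply/andP.
Qed.

Lemma trunc_bounds (p s n : R) : s <= n ->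
  s <= Num.min (Num.max p s) n <= n.
Proof.
move=> sn; case: (trunc_cases p sn) => [[/andP[h1 h2] ->]|[[_ ->]|[_ ->]]];
  by rewrite ?h1 ?h2 ?lexx ?sn.
Qed.

Lemma ainf_pt (p s n m M v : R) : 0 < s -> s <= n -> 0 < p -> s <= m <= n -> 0 < M ->
  v = Num.min (Num.max p s) n ->
  ln p - ln v <= (p - v) / M + m / M - 1 + (ln M - ln m).
Proof.
move=> s0 sn p0 /andP[sm mn] M0 hv.
have v0 : 0 < v by rewrite hv; have /andP[+ _] := trunc_bounds p sn; exact: lt_le_trans.
have m0 : 0 < m := lt_le_trans s0 sm.
have key : (p - v) * (m - v) <= 0.
  rewrite hv; case: (trunc_cases p sn) => [[_ ->]|[[ps ->]|[np ->]]].
  - by rewrite subrr mul0r.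
  - by rewrite mulr_le0_ge0 // ?subr_le0 ?subr_ge0 // ltW.
  - by rewrite mulr_ge0_le0 // ?subr_le0 ?subr_ge0 // ltW.
have y0 : 0 < p * m / (v * M) by rewrite divr_gt0 ?mulr_gt0.
have := ln_le_sub1 y0.
rewrite ln_div ?posrE ?mulr_gt0 // !lnM ?posrE //.
move=> h.
have q1 : p * m / v <= p - v + m by rewrite ler_pdivrMr //; nra.
have q2 : p * m / (v * M) = (p * m / v) / M by field; rewrite !lt0r_neq0.
have q3 : (p * m / v) / M <= (p - v + m) / M by rewrite ler_pM2r // invr_gt0.
have q4 : (p - v + m) / M = (p - v) / M + m / M by rewrite mulrDl.
lra.
Qed.

Lemma xlogx_pt (a b : R) : 0 < a -> 0 < b -> a * ln b + a - b <= a * ln a.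
Proof.
move=> a0 b0; have := ln_le_sub1 (divr_gt0 b0 a0).
rewrite ln_div ?posrE // => h.
have : a * (ln b - ln a) <= a * (b / a - 1) by rewrite ler_pM2l.
have e : a * (b / a - 1) = b - a by field; rewrite lt0r_neq0.
rewrite e; lra.
Qed.

Lemma rh1_pt (p s n m M c v : R) : 0 < s -> s <= n -> 0 < p -> 0 < m -> 0 < M ->
  ln (s / m) <= c <= ln (n / m) ->
  v = Num.min (Num.max p s) n ->
  v / M * ln (v / m) + c * ((p - v) / M) + p / M - v / m <= p / M * ln (p / M).
Proof.
move=> s0 sn p0 m0 M0 /andP[c1 c2] hv.
have v0 : 0 < v by rewrite hv; have /andP[+ _] := trunc_bounds p sn; exact: lt_le_trans.
have key : 0 <= (p - v) * (ln (v / m) - c).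
  rewrite hv; case: (trunc_cases p sn) => [[_ ->]|[[ps ->]|[np ->]]].
  - by rewrite subrr mul0r.
  - by rewrite mulr_le0 // ?subr_le0 // ltW.
  - by rewrite mulr_ge0 // ?subr_ge0 // ltW.
apply: le_trans (xlogx_pt (divr_gt0 p0 M0) (divr_gt0 v0 m0)).
rewrite lerD2r lerD2r -subr_ge0.
have -> : p / M * ln (v / m) - (v / M * ln (v / m) + c * ((p - v) / M)) = (p - v) * (ln (v / m) - c) / M.
  by field; rewrite lt0r_neq0.
by rewrite divr_ge0 // ltW.
Qed.


Lemma alg1 (L Ilv M m lM lm : R) : L != 0 -> M != 0 ->
  L^-1 * (Ilv + (M * L - m * L) / M + (m / M - 1 + (lM - lm)) * L) =
  L^-1 * Ilv + (lM - lm).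
Proof. by move=> L0 M0; field; rewrite L0 M0. Qed.


Lemma alg2 (L c0 M m : R) : L != 0 -> M != 0 -> m != 0 ->
  L^-1 * (c0 * L * (m / M) + (M * L - m * L) * (c0 / M) + M * L * M^-1 - m * L * m^-1) = c0.
Proof. by move=> L0 M0 m0; field; rewrite L0 M0 m0. Qed.

Lemma alg3 (v p m M c0 : R) : M != 0 -> m != 0 ->
  v / m * ln (v / m) * (m / M) + (p - v) * (c0 / M) + p * M^-1 - v * m^-1 =
  v / M * ln (v / m) + c0 * ((p - v) / M) + p / M - v / m.
Proof. by move=> M0 m0; field; rewrite M0 m0. Qed.


Lemma alg4 (L c0 M m : R) : M != 0 -> m != 0 ->
  c0 * L * (m / M) + (M * L - m * L) * (c0 / M) + M * L / M - m * L / m = c0 * L.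
Proof. by move=> M0 m0; field; rewrite M0 m0. Qed.

End real.

Section core.
Context {R : realType}.
Local Notation mu := (@lebesgue_measure R).

Lemma int_ge (a b : R) (f g : R -> R) : measurable_fun setT f ->
  mu.-integrable `[a, b] (EFin \o g) -> (forall x, g x <= f x) ->
  (\int[mu]_(x in `[a, b]) (g x)%:E <= \int[mu]_(x in `[a, b]) (f x)%:E)%E.
Proof.
move=> mf ig gf; have mg := measurable_int mu ig.
have mf' : measurable_fun `[a, b] (EFin \o f).
  by apply/measurable_EFinP; exact: measurable_funS mf.
rewrite integralE [leRHS]integralE; apply: leeB.
- apply: (@ge0_le_integral _ _ _ mu _ (measurable_itv `[a, b])).
  + by move=> x _; exact: funepos_ge0.
  + exact: measurable_funepos.
  + exact: measurable_funepos.
  + by move=> x _; rewrite !funeposE /=; apply: le_max2 => //; rewrite lee_fin.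
- apply: (@ge0_le_integral _ _ _ mu _ (measurable_itv `[a, b])).
  + by move=> x _; exact: funeneg_ge0.
  + exact: measurable_funeneg.
  + exact: measurable_funeneg.
  + by move=> x _; rewrite !funenegE /=; apply: le_max2 => //; rewrite lee_fin lerN2.
Qed.

Lemma int_gt0 (a b : R) (p : R -> R) : a < b -> measurable_fun setT p ->
  (forall x, 0 < p x) -> (0 < \int[mu]_(x in `[a, b]) (p x)%:E)%E.
Proof.
move=> ab mp p0; rewrite lt_neqAle integral_ge0 ?andbT; last first.
  by move=> x _; rewrite lee_fin ltW.
apply/eqP => /esym h.
have mp' : measurable_fun `[a, b] (EFin \o p).
  by apply/measurable_EFinP; exact: measurable_funS mp.
have := (ae_eq_integral_abs mu (measurable_itv `[a, b]) mp').1.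
case.
  rewrite -h; apply: eq_integral => x _ /=.
  by rewrite gtr0_norm.
move=> N [mN N0 sub].
have JN : `[a, b] `<=` N.
  move=> x Jx; apply: sub => /= H; have := H Jx.
  by move=> [] /eqP; rewrite gt_eqF.
have : (mu `[a, b] <= mu N)%E.
  exact: (@le_measure _ _ _ mu _ _ (mem_set (measurable_itv `[a, b])) (mem_set mN) JN).
rewrite N0 muJ //.
by rewrite lee_fin subr_le0 leNgt ab.
Qed.


Lemma int_le (a b : R) (f g : R -> R) : measurable_fun setT f ->
  mu.-integrable `[a, b] (EFin \o g) -> (forall x, f x <= g x) ->
  (\int[mu]_(x in `[a, b]) (f x)%:E <= \int[mu]_(x in `[a, b]) (g x)%:E)%E.
Proof.
move=> mf ig gf; have mg := measurable_int mu ig.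
have mf' : measurable_fun `[a, b] (EFin \o f).
  by apply/measurable_EFinP; exact: measurable_funS mf.
rewrite integralE [leRHS]integralE; apply: leeB.
- apply: (@ge0_le_integral _ _ _ mu _ (measurable_itv `[a, b])).
  + by move=> x _; exact: funepos_ge0.
  + exact: measurable_funepos.
  + exact: measurable_funepos.
  + by move=> x _; rewrite !funeposE /=; apply: le_max2 => //; rewrite lee_fin.
- apply: (@ge0_le_integral _ _ _ mu _ (measurable_itv `[a, b])).
  + by move=> x _; exact: funeneg_ge0.
  + exact: measurable_funeneg.
  + exact: measurable_funeneg.
  + by move=> x _; rewrite !funenegE /=; apply: le_max2 => //; rewrite lee_fin lerN2.
Qed.

Lemma iD (a b : R) (f g : R -> R) : mu.-integrable `[a, b] (EFin \o f) ->
  mu.-integrable `[a, b] (EFin \o g) ->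
  mu.-integrable `[a, b] (EFin \o (fun x => f x + g x)).
Proof.
move=> i1 i2; apply: (eq_integrable _ _ _ _ (integrableD _ i1 i2)); try exact: measurable_itv.
by move=> x _; rewrite /= EFinD.
Qed.

Lemma iB (a b : R) (f g : R -> R) : mu.-integrable `[a, b] (EFin \o f) ->
  mu.-integrable `[a, b] (EFin \o g) ->
  mu.-integrable `[a, b] (EFin \o (fun x => f x - g x)).
Proof.
move=> i1 i2; apply: (eq_integrable _ _ _ _ (integrableB _ i1 i2)); try exact: measurable_itv.
by move=> x _; rewrite /= EFinB.
Qed.

Lemma iZr (a b : R) (f : R -> R) (k : R) : mu.-integrable `[a, b] (EFin \o f) ->
  mu.-integrable `[a, b] (EFin \o (fun x => f x * k)).
Proof.
move=> i1; apply: (eq_integrable _ _ _ _ (integrableZr _ k i1)); try exact: measurable_itv.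
by move=> x _; rewrite /= EFinM.
Qed.

Lemma icst (a b : R) (k : R) : a < b ->
  mu.-integrable `[a, b] (EFin \o (fun _ : R => k)).
Proof.
move=> ab; apply: (@bdd_integrable _ a b _ `|k|) => //.
Qed.

Lemma int_fin (a b : R) (f : R -> R) : mu.-integrable `[a, b] (EFin \o f) ->
  (\int[mu]_(x in `[a, b]) (f x)%:E)%E = (\int[mu]_(x in `[a, b]) f x)%:E.
Proof.
move=> fi; rewrite /Rintegral fineK //.
apply: (integrable_fin_num _ fi); exact: measurable_itv.
Qed.


Lemma norm_between (lo x hi : R) : lo <= x <= hi -> `|x| <= `|lo| + `|hi|.
Proof.
move=> /andP[h1 h2]; rewrite ler_norml.
have := ler_norm (- lo); rewrite normrN => h3.
have := ler_norm hi => h4.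
have := normr_ge0 lo; have := normr_ge0 hi.
move=> h5 h6; apply/andP; split; lra.
Qed.

Lemma ainf_core (a b : R) (p : R -> R) (n : nat) : a < b -> (0 < n)%N ->
  measurable_fun setT p -> (forall x, 0 < p x) ->
  mu.-integrable `[a, b] (EFin \o p) ->
  (ainf_avg (trunc n p) a b <= ainf_avg p a b)%E.
Proof.
move=> ab n0 mp p0 ip.
set s : R := n%:R^-1; set N : R := n%:R.
have N1 : 1 <= N by rewrite /N ler1n.
have N0 : 0 < N by rewrite /N ltr0n.
have s0 : 0 < s by rewrite /s invr_gt0.
have sN : s <= N by rewrite /s (le_trans _ N1) // invf_le1.
set v := trunc n p.
have vE : forall x, v x = Num.min (Num.max (p x) s) N by [].
have vb : forall x, s <= v x <= N := fun x => trunc_bounds (p x) sN.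
have mv : measurable_fun setT v := measurable_trunc n mp.
have iv : mu.-integrable `[a, b] (EFin \o v).
  apply: (@bdd_integrable _ a b v N) => // x.
  by have /andP[h1 h2] := vb x; rewrite ger0_norm // (le_trans (ltW s0)).
have mlv : measurable_fun setT (fun x => ln (v x)).
  exact: (measurableT_comp (@measurable_ln R) mv).
have mlp : measurable_fun setT (fun x => ln (p x)).
  exact: (measurableT_comp (@measurable_ln R) mp).
have ilv : mu.-integrable `[a, b] (EFin \o (fun x => ln (v x))).
  apply: (@bdd_integrable _ a b _ (`|ln s| + `|ln N|)) => // x.
  apply: norm_between; have /andP[h1 h2] := vb x.
  have vx0 : 0 < v x := lt_le_trans s0 h1.
  by rewrite !ler_ln ?posrE // h1 h2.
set L := b - a; have L0 : 0 < L by rewrite /L subr_gt0.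
set Iv := \int[mu]_(x in `[a, b]) v x.
set Ip := \int[mu]_(x in `[a, b]) p x.
set Ilv := \int[mu]_(x in `[a, b]) ln (v x).
set m := L^-1 * Iv; set M := L^-1 * Ip.
have mL : Iv = m * L by rewrite /m mulrC mulrA mulfV ?mul1r // gt_eqF.
have ML : Ip = M * L by rewrite /M mulrC mulrA mulfV ?mul1r // gt_eqF.
have Ivlo : s * L <= Iv.
  rewrite -(Rint_cst s ab); apply: le_Rintegral; first exact: measurable_itv.
  - exact: icst.
  - exact: iv.
  - by move=> x _; have /andP[] := vb x.
have Ivhi : Iv <= N * L.
  rewrite -(Rint_cst N ab); apply: le_Rintegral; first exact: measurable_itv.
  - exact: iv.
  - exact: icst.
  - by move=> x _; have /andP[] := vb x.
have sm : s <= m by rewrite -(ler_pM2r L0) -mL.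
have mN : m <= N by rewrite -(ler_pM2r L0) -mL.
have m0 : 0 < m := lt_le_trans s0 sm.
have Ip0 : 0 < Ip.
  have := int_gt0 ab mp p0; rewrite int_fin // lte_fin //.
have M0 : 0 < M by rewrite /M mulr_gt0 // invr_gt0.
set K := m / M - 1 + (ln M - ln m).
set G := fun x => ln (v x) + (p x - v x) * M^-1 + K.
have pG : forall x, ln (p x) <= G x.
  have smN : s <= m <= N by rewrite sm mN.
  move=> x; have := ainf_pt s0 sN (p0 x) smN M0 (vE x).
  rewrite /G /K => h; lra.
have iG : mu.-integrable `[a, b] (EFin \o G).
  apply: iD; last exact: icst.
  by apply: iD => //; apply: iZr; apply: iB.
have intG : \int[mu]_(x in `[a, b]) G x = Ilv + (Ip - Iv) * M^-1 + K * L.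
  rewrite /G RintegralD; [|exact: measurable_itv| |exact: icst]; last first.
    by apply: iD => //; apply: iZr; apply: iB.
  rewrite RintegralD; [|exact: measurable_itv|exact: ilv|]; last first.
    by apply: iZr; apply: iB.
  rewrite RintegralZr; [|exact: measurable_itv|by apply: iB].
  rewrite RintegralB; [|exact: measurable_itv|exact: ip|exact: iv].
  by rewrite Rint_cst.
have avgp : (avg (fun x => ln (p x)) a b <= (L^-1 * Ilv + (ln M - ln m))%:E)%E.
  rewrite /avg; apply: le_trans.
    apply: lee_wpmul2l; first by rewrite lee_fin invr_ge0 ltW.
    exact: (int_le mlp iG pG).
  rewrite int_fin // intG -EFinM lee_fin le_eqVlt; apply/orP; left; apply/eqP.
  by rewrite ML mL /K -/L; apply: alg1; rewrite gt_eqF.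
rewrite /ainf_avg (avg_fin iv) (avg_fin ilv) -/m (avg_fin ip) -/M.
apply: le_trans (_ : (M%:E * expeR (- (L^-1 * Ilv + (ln M - ln m))%:E) <= _)%E); last first.
  apply: lee_wpmul2l; first by rewrite lee_fin ltW.
  by rewrite lee_expeR leeN2.
rewrite -EFinN /= -EFinM lee_fin le_eqVlt; apply/orP; left; apply/eqP.
rewrite opprD expRD /M.
have -> : - (ln (L^-1 * Ip) - ln m) = ln m - ln (L^-1 * Ip) by ring.
rewrite expRB !lnK ?posrE // -/M.
by field; rewrite gt_eqF.
Qed.

Lemma rh1_core (a b : R) (p : R -> R) (n : nat) : a < b -> (0 < n)%N ->
  measurable_fun setT p -> (forall x, 0 < p x) ->
  mu.-integrable `[a, b] (EFin \o p) ->
  (rh1_avg (trunc n p) a b <= rh1_avg p a b)%E.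
Proof.
move=> ab n0 mp p0 ip.
set s : R := n%:R^-1; set N : R := n%:R.
have N1 : 1 <= N by rewrite /N ler1n.
have N0 : 0 < N by rewrite /N ltr0n.
have s0 : 0 < s by rewrite /s invr_gt0.
have sN : s <= N by rewrite /s (le_trans _ N1) // invf_le1.
set v := trunc n p.
have vE : forall x, v x = Num.min (Num.max (p x) s) N by [].
have vb : forall x, s <= v x <= N := fun x => trunc_bounds (p x) sN.
have mv : measurable_fun setT v := measurable_trunc n mp.
have iv : mu.-integrable `[a, b] (EFin \o v).
  apply: (@bdd_integrable _ a b v N) => // x.
  by have /andP[h1 h2] := vb x; rewrite ger0_norm // (le_trans (ltW s0)).
have mlv : measurable_fun setT (fun x => ln (v x)).
  exact: (measurableT_comp (@measurable_ln R) mv).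
have mlp : measurable_fun setT (fun x => ln (p x)).
  exact: (measurableT_comp (@measurable_ln R) mp).
have ilv : mu.-integrable `[a, b] (EFin \o (fun x => ln (v x))).
  apply: (@bdd_integrable _ a b _ (`|ln s| + `|ln N|)) => // x.
  apply: norm_between; have /andP[h1 h2] := vb x.
  have vx0 : 0 < v x := lt_le_trans s0 h1.
  by rewrite !ler_ln ?posrE // h1 h2.
set L := b - a; have L0 : 0 < L by rewrite /L subr_gt0.
set Iv := \int[mu]_(x in `[a, b]) v x.
set Ip := \int[mu]_(x in `[a, b]) p x.
set Ilv := \int[mu]_(x in `[a, b]) ln (v x).
set m := L^-1 * Iv; set M := L^-1 * Ip.
have mL : Iv = m * L by rewrite /m mulrC mulrA mulfV ?mul1r // gt_eqF.
have ML : Ip = M * L by rewrite /M mulrC mulrA mulfV ?mul1r // gt_eqF.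
have Ivlo : s * L <= Iv.
  rewrite -(Rint_cst s ab); apply: le_Rintegral; first exact: measurable_itv.
  - exact: icst.
  - exact: iv.
  - by move=> x _; have /andP[] := vb x.
have Ivhi : Iv <= N * L.
  rewrite -(Rint_cst N ab); apply: le_Rintegral; first exact: measurable_itv.
  - exact: iv.
  - exact: icst.
  - by move=> x _; have /andP[] := vb x.
have sm : s <= m by rewrite -(ler_pM2r L0) -mL.
have mN : m <= N by rewrite -(ler_pM2r L0) -mL.
have m0 : 0 < m := lt_le_trans s0 sm.
have Ip0 : 0 < Ip.
  have := int_gt0 ab mp p0; rewrite int_fin // lte_fin //.
have M0 : 0 < M by rewrite /M mulr_gt0 // invr_gt0.
set fv := fun x => v x / m * ln (v x / m).
set fp := fun x => p x / M * ln (p x / M).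
have mfv : measurable_fun setT fv.
  apply: measurable_funM; first exact: measurable_funM.
  apply: (measurableT_comp (@measurable_ln R)); exact: measurable_funM.
have mfp : measurable_fun setT fp.
  apply: measurable_funM; first exact: measurable_funM.
  apply: (measurableT_comp (@measurable_ln R)); exact: measurable_funM.
have lvb : forall x, ln (s / m) <= ln (v x / m) <= ln (N / m).
  move=> x; have /andP[h1 h2] := vb x.
  have vx0 : 0 < v x := lt_le_trans s0 h1.
  by apply/andP; split; rewrite ler_ln ?posrE ?divr_gt0 // ler_pM2r ?invr_gt0.
have ifv : mu.-integrable `[a, b] (EFin \o fv).
  apply: (@bdd_integrable _ a b _ (N / m * (`|ln (s / m)| + `|ln (N / m)|))) => // x.
  rewrite /fv normrM; apply: ler_pM => //.
    have /andP[h1 h2] := vb x.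
    have vx0 : 0 <= v x / m by rewrite divr_ge0 // ltW // (lt_le_trans s0 h1).
    by rewrite ger0_norm // ler_pM2r // invr_gt0.
  exact: norm_between.
set Ifv := \int[mu]_(x in `[a, b]) fv x.
set c0 := L^-1 * Ifv.
have cL : Ifv = c0 * L by rewrite /c0 mulrC mulrA mulfV ?mul1r // gt_eqF.
have c0hi : c0 <= ln (N / m).
  have : Ifv <= \int[mu]_(x in `[a, b]) (v x * (m^-1 * ln (N / m))).
    apply: le_Rintegral; first exact: measurable_itv.
    - exact: ifv.
    - exact: iZr.
    - move=> x _; rewrite /fv mulrA; apply: ler_wpM2l.
        have /andP[h1 _] := vb x.
        by rewrite divr_ge0 // ?(le_trans (ltW s0)) // ltW.
      by have /andP[] := lvb x.
  rewrite RintegralZr; [|exact: measurable_itv|exact: iv].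
  rewrite -/Iv cL mL => h; rewrite -(ler_pM2r L0); apply: le_trans h _.
  by rewrite le_eqVlt; apply/orP; left; apply/eqP; field; rewrite !gt_eqF.
have c0lo : ln (s / m) <= c0.
  have : \int[mu]_(x in `[a, b]) (v x * (m^-1 * ln (s / m))) <= Ifv.
    apply: le_Rintegral; first exact: measurable_itv.
    - exact: iZr.
    - exact: ifv.
    - move=> x _; rewrite /fv mulrA; apply: ler_wpM2l.
        have /andP[h1 _] := vb x.
        by rewrite divr_ge0 // ?(le_trans (ltW s0)) // ltW.
      by have /andP[] := lvb x.
  rewrite RintegralZr; [|exact: measurable_itv|exact: iv].
  rewrite -/Iv cL mL => h; rewrite -(ler_pM2r L0); apply: le_trans _ h.
  by rewrite le_eqVlt; apply/orP; left; apply/eqP; field; rewrite !gt_eqF.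
set h := fun x => fv x * (m / M) + (p x - v x) * (c0 / M) + p x * M^-1 - v x * m^-1.
have hfp : forall x, h x <= fp x.
  move=> x; rewrite /h /fv alg3 ?gt_eqF //.
  have cb : ln (s / m) <= c0 <= ln (N / m) by apply/andP; split.
  exact: (rh1_pt s0 sN (p0 x) m0 M0 cb (vE x)).
have ih : mu.-integrable `[a, b] (EFin \o h).
  apply: iB; last exact: iZr.
  apply: iD; last exact: iZr.
  apply: iD; first exact: iZr.
  by apply: iZr; apply: iB.
have inth : \int[mu]_(x in `[a, b]) h x = c0 * L.
  rewrite /h RintegralB; [|exact: measurable_itv| |exact: iZr]; last first.
    apply: iD; last exact: iZr.
    apply: iD; first exact: iZr.
    by apply: iZr; apply: iB.
  rewrite RintegralD; [|exact: measurable_itv| |exact: iZr]; last first.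
    apply: iD; first exact: iZr.
    by apply: iZr; apply: iB.
  rewrite RintegralD; [|exact: measurable_itv|exact: iZr|]; last first.
    by apply: iZr; apply: iB.
  rewrite !RintegralZr; try exact: measurable_itv; try exact: ifv; try exact: iv; try exact: ip; try (apply: iB; [exact: ip|exact: iv]).
  rewrite RintegralB; [|exact: measurable_itv|exact: ip|exact: iv].
  rewrite -/Ifv -/Ip -/Iv cL ML mL.
  by rewrite alg4 ?gt_eqF.
have avgv : rh1_avg v a b = c0%:E.
  rewrite /rh1_avg (avg_fin iv) -/m /=.
  by rewrite (avg_fin ifv).
have avgp : (c0%:E <= rh1_avg p a b)%E.
  rewrite /rh1_avg (avg_fin ip) -/M /=.
  rewrite /avg; apply: le_trans; last first.
    apply: lee_wpmul2l; first by rewrite lee_fin invr_ge0 ltW.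
    exact: (int_ge mfp ih hfp).
  rewrite int_fin // inth -EFinM lee_fin le_eqVlt; apply/orP; left; apply/eqP.
  by rewrite -/L; field; rewrite gt_eqF.
by rewrite avgv.
Qed.

End core.

Section fin.
Context {R : realType}.
Local Notation mu := (@lebesgue_measure R).

Lemma weight_int (w : R -> R) (a b : R) : a < b -> weight w ->
  measurable_fun setT w /\ mu.-integrable `[a, b] (EFin \o pos w).
Proof.
move=> ab [[mw _ li] wp]; split => //.
have iw : mu.-integrable `[a, b] (EFin \o w).
  apply/integrableP; split.
    by apply/measurable_EFinP; exact: measurable_funS mw.
  exact: (li _ (@subsetT _ _) (@segment_compact _ a b)).
have inw : mu.-integrable `[a, b] (EFin \o (fun x => `|w x| + 1)).
  by apply: iD; [exact: integrable_norm|exact: icst].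
apply: le_integrable inw.
- exact: measurable_itv.
- by apply/measurable_EFinP; apply: measurable_funS (measurable_pos mw).
- move=> x _ /=; rewrite lee_fin (ger0_norm (_ : 0 <= `|w x| + 1)); last first.
    by rewrite addr_ge0.
  rewrite /pos; case: ifP => _; first by rewrite lerDl.
  by rewrite normr1 lerDr.
Qed.

End fin.
Unset Implicit Arguments. Set Strict Implicit.

Theorem lemma1 (R : realType) :
  (forall (w : R -> R) (n : nat), weight w -> (RH1_const w < +oo)%E ->
     (0 < n)%N -> (RH1_const (trunc n w) <= RH1_const w)%E) /\
  (forall (w : R -> R) (n : nat), weight w -> (Ainf_const w < +oo)%E ->
     (0 < n)%N -> (Ainf_const (trunc n w) <= Ainf_const w)%E).
Proof.
split => w n ww _ n0.
- apply: ge_ereal_sup => _ [a [b [ab ->]]].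
  have [mw ip] := weight_int ab ww.
  have wp := ww.2.
  apply: le_ereal_sup_tmp; exists (rh1_avg w a b); first by exists a, b.
  rewrite (rh1_ae a b (measurable_trunc n mw) (measurable_trunc n (measurable_pos mw)) (trunc_pos n wp)).
  rewrite (rh1_ae a b mw (measurable_pos mw) (ae_pos id wp)).
  apply: rh1_core => //; [exact: measurable_pos|exact: pos_gt0].
- apply: ge_ereal_sup => _ [a [b [ab ->]]].
  have [mw ip] := weight_int ab ww.
  have wp := ww.2.
  apply: le_ereal_sup_tmp; exists (ainf_avg w a b); first by exists a, b.
  rewrite (ainf_trunc_pos a b n mw wp) (ainf_pos a b mw wp).
  apply: ainf_core => //; [exact: measurable_pos|exact: pos_gt0].
Qed.
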